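(* For every $c\ge0$, every distribution $\mathcal{D}$ over $\mathbb{R}^k_{\ge0}$ and every mechanism $M$, there exists a $c$-expensive mechanism $M'$ with $\mathrm{Rev}(\mathcal{D},M')\ge\mathrm{Rev}(\mathcal{D},M)-c$.
   Context: Setting: one seller, one additive buyer, $k$ items; the buyer's value vector $\vec v\in\mathbb{R}^k_{\ge0}$ is drawn from a distribution $\mathcal{D}$. A mechanism $M$ is a set of options $(\vec q,p)$ with $\vec q\in[0,1]^k$, $p\in\mathbb{R}$, always containing the null option $(\vec 0,0)$; a buyer with values $\vec v$ selects an option maximizing $\vec v\cdot\vec q-p$ (ties broken arbitrarily; a maximizer is assumed to exist), and $\vec q^M(\vec v),p^M(\vec v)$ denote the allocation and price of the selected option. $\mathrm{Rev}(\mathcal{D},M)=\mathbb{E}_{\vec v\sim\mathcal{D}}[p^M(\vec v)]$. A mechanism is $c$-expensive if every option other than the null option $(\vec 0,0)$ has price at least $c$. *)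

(* Defs.v *)
From HB Require Import structures.
From mathcomp Require Import all_boot all_order all_algebra.
From mathcomp Require Import all_classical all_reals all_analysis.
Set Implicit Arguments. Unset Strict Implicit. Unset Printing Implicit Defensive.
Import Order.TTheory GRing.Theory Num.Theory.
Local Open Scope ring_scope.
Local Open Scope classical_set_scope.

(* Value vectors and allocations live in R^k, represented as k.-tuple R
   (which carries the product = Borel sigma-algebra in MathComp-Analysis).
   An option is a pair (q, p) : allocation * price. *)
Section Defs.
Variables (R : realType) (k : nat).

Definition opt := (k.-tuple R * R)%type.

Definition null_opt : opt := ([tuple (0 : R) | _ < k], 0).

Definition utility (v : k.-tuple R) (o : opt) : R :=
  \sum_(i < k) tnth v i * tnth o.1 i - o.2.

Definition nonneg_vec (v : k.-tuple R) : Prop := forall i : 'I_k, 0 <= tnth v i.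

Definition is_mechanism (M : set opt) : Prop :=
  M null_opt /\ forall o, M o -> forall i : 'I_k, 0 <= tnth o.1 i <= 1.

Definition is_choice (M : set opt) (sel : k.-tuple R -> opt) : Prop :=
  forall v, nonneg_vec v ->
    M (sel v) /\ forall o, M o -> utility v o <= utility v (sel v).

Definition expensive (c : R) (M : set opt) : Prop :=
  forall o, M o -> o <> null_opt -> c <= o.2.

Definition Rev (D : probability (k.-tuple R) R) (sel : k.-tuple R -> opt)
  : \bar R := (\int[D]_v ((sel v).2)%:E)%E.

End Defs.

(* Main.v *)
Require Import Defs.
From HB Require Import structures.
From mathcomp Require Import all_boot all_order all_algebra.
From mathcomp Require Import all_classical all_reals all_analysis.
Import Order.TTheory GRing.Theory Num.Theory.
Import numFieldNormedType.Exports.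
Local Open Scope ring_scope.
Local Open Scope classical_set_scope.
From mathcomp Require Import ring lra.
Definition dotp (R : realType) k (w q : k.-tuple R) : R := \sum_(i < k) tnth w i * tnth q i.
Arguments dotp {R k}.

Lemma lin_cont (R : realType) k (a : 'I_k -> R) :
  continuous (fun x : 'rV[R]_k => \sum_(i < k) a i * x ord0 i).
Proof.
apply: continuous_big => [|i _].
  exact: add_continuous.
move=> x; apply: continuousM; [exact: cst_continuous| exact: coord_continuous].
Qed.

Lemma box_closed (R : realType) k :
  closed [set x : 'rV[R]_k | forall i, `[(0:R), 1]%classic (x ord0 i)].
Proof.
      have -> : [set x : 'rV[R]_k | forall i, `[(0:R), 1]%classic (x ord0 i)] =
  \bigcap_(i in [set: 'I_k]) ((fun x : 'rV[R]_k => x ord0 i) @^-1` ([set y : R | 0 <= y] `&` [set y | y <= 1])).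
  apply/seteqP; split => x /=.
    by move=> H i _; have := H i; rewrite /= in_itv /= => /andP.
  by move=> H i; have [] := H i I; rewrite /= in_itv /= => -> ->.
apply: closed_bigI => i _; apply: preimage_closed.
  by move=> x _; exact: coord_continuous.
by apply: closedI; [exact: closed_ge | exact: closed_le].
Qed.

Lemma max_exists (R : realType) k (J : Type) (a : J -> k.-tuple R) (b : J -> R)
  (v : k.-tuple R) (Q : set (k.-tuple R)) :
  Q = [set q | (forall i, 0 <= tnth q i <= 1) /\ forall j, dotp (a j) q <= b j] ->
  Q !=set0 -> exists2 q, Q q & forall q', Q q' -> dotp v q' <= dotp v q.
Proof.
move=> QE [q0 Qq0].
pose rt (x : 'rV[R]_k) : k.-tuple R := [tuple x ord0 i | i < k].
pose tr (q : k.-tuple R) : 'rV[R]_k := \row_i tnth q i.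
have rttr q : rt (tr q) = q.
  by apply: eq_from_tnth => i; rewrite tnth_mktuple mxE.
pose A := [set x | Q (rt x)].
have AE : A = [set x | forall i, `[(0:R), 1] (x ord0 i)] `&`
   \bigcap_(j in [set: J]) [set x | \sum_(i < k) tnth (a j) i * x ord0 i <= b j].
  rewrite /A QE; apply/seteqP; split => x /=.
    move=> [H1 H2]; split.
      by move=> i; have := H1 i; rewrite /rt tnth_mktuple /= in_itv.
    move=> j _ /=; have := H2 j; rewrite /dotp /rt.
    move=> H; apply: le_trans H; rewrite le_eqVlt; apply/orP; left; apply/eqP.
  by apply: eq_bigr => i _; rewrite tnth_mktuple.
  move=> [H1 H2]; split.
    by move=> i; have := H1 i; rewrite /rt tnth_mktuple /= in_itv.
  move=> j; have := H2 j I; rewrite /dotp /rt /=.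
  move=> H; apply: le_trans H; rewrite le_eqVlt; apply/orP; left; apply/eqP.
  by apply: eq_bigr => i _; rewrite tnth_mktuple.
have cA : compact A.
  rewrite AE; apply: (subclosed_compact _ (@rV_compact _ _ (fun=> `[(0:R), 1]%classic) _)).
  - apply: closedI.
      exact: box_closed.
    apply: closed_bigI => j _.
    apply: (@preimage_closed _ _ (fun x : 'rV[R]_k => \sum_(i < k) tnth (a j) i * x ord0 i) [set y | y <= b j]).
      by move=> x _; apply: lin_cont.
    exact: closed_le.
  - by move=> _; exact: segment_compact.
  - by move=> x [+ _]; move=> H i; have := H i.
have A0 : A !=set0 by exists (tr q0); rewrite /A /= rttr.
have cont : {within A, continuous (fun x => dotp v (rt x))}.
  apply: continuous_subspaceT => x.
  have -> : (fun x => dotp v (rt x)) = (fun x : 'rV[R]_k => \sum_(i < k) tnth v i * x ord0 i).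
    by apply: funext => y; rewrite /dotp; apply: eq_bigr => i _; rewrite tnth_mktuple.
  exact: lin_cont.
have [x Ax xmax] := @compact_EVT_max _ _ (fun x => dotp v (rt x)) A A0 cA cont.
exists (rt x); first by rewrite inE in Ax.
move=> q' Qq'; rewrite -(rttr q'); apply: xmax; rewrite inE /A /= rttr //.
Qed.

Lemma pieces_meas (R : realType) k (F : k.-tuple R -> k.-tuple int) (phi : k.-tuple int -> R) :
  (forall t, measurable [set v | F v = t]) ->
  measurable_fun [set: k.-tuple R] (fun v => phi (F v)).
Proof.
move=> mF _ Y mY; rewrite setTI.
have -> : (fun v => phi (F v)) @^-1` Y = \bigcup_(m in [set: nat])
   (match unpickle m : option (k.-tuple int) with
    | Some t => if asbool (Y (phi t)) then [set v | F v = t] else set0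
    | None => set0 end).
  apply/seteqP; split => v /=.
    move=> Yv; exists (pickle (F v)) => //; rewrite pickleK.
    by case: asboolP.
  move=> [m _]; case: (unpickle m) => [t|] //; case: asboolP => // Yt /= Ft.
  by rewrite Ft.
apply: bigcup_measurable => m _; case: (unpickle m) => [t|] //.
case: asboolP => // _; exact: mF.
Qed.

Lemma floor_piece_meas (R : realType) k (a : R) (t : k.-tuple int) :
  measurable [set v : k.-tuple R | [tuple Num.floor (a * tnth v i) | i < k] = t].
Proof.
have -> : [set v : k.-tuple R | [tuple Num.floor (a * tnth v i) | i < k] = t] =
  \bigcap_(i in [set: 'I_k]) ([set: k.-tuple R] `&` (fun v : k.-tuple R => a * tnth v i) @^-1`
        [set` Interval (BLeft (tnth t i)%:~R) (BLeft (tnth t i + 1)%:~R)]).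
  apply/seteqP; split => v /=.
    move=> <- i _; split => //=; rewrite tnth_mktuple in_itv /=.
    exact: floor_itv.
  move=> H; apply: eq_from_tnth => i; rewrite tnth_mktuple.
  have [_] := H i I; rewrite /= in_itv /= => Hi.
  by apply/eqP; rewrite floor_eq.
apply: fin_bigcap_measurable; first exact: finite_finset.
move=> i _.
have m := measurableT_comp (@measurable_realfun.mulrl_measurable R setT a) (@measurable_tnth _ _ k i).
exact: (m measurableT _ (measurable_itv _)).
Qed.

Lemma lip_meas (R : realType) k (g : k.-tuple R -> R) :
  (forall v w, g v - g w <= \sum_(i < k) `|tnth v i - tnth w i|) ->
  measurable_fun [set: k.-tuple R] g.
Proof.
move=> Lg.
pose a (n : nat) : R := n.+1%:R.
pose F n (v : k.-tuple R) : k.-tuple int := [tuple Num.floor (a n * tnth v i) | i < k].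
pose G n (t : k.-tuple int) : k.-tuple R := [tuple (tnth t i)%:~R / a n | i < k].
have a0 n : 0 < a n by rewrite /a ltr0n.
have Fb n v i : `|tnth v i - tnth (G n (F n v)) i| <= (a n)^-1.
  rewrite !tnth_mktuple; have /andP[h1 h2] := floor_itv (a n * tnth v i).
  rewrite ger0_norm; last first.
    rewrite subr_ge0 ler_pdivrMr; first by rewrite [tnth v i * _]mulrC.
    exact: a0.
  rewrite lerBlDr -[X in _ <= X + _](mulr1 (a n)^-1) -[_ / _]mulrC -mulrDr.
  rewrite ler_pdivlMl; last exact: a0.
  by apply: ltW; rewrite intrD in h2; rewrite addrC.
apply: (@measurable_realfun.measurable_fun_cvg _ _ _ _ (fun n v => g (G n (F n v)))).
  move=> n.
  have P1 : forall t, measurable [set v | F n v = t].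
    move=> t; exact: (floor_piece_meas _ _ (a n) t).
  have := pieces_meas _ _ (F n) (fun t => g (G n t)) P1.
  exact.
move=> v _; apply/cvgrPdist_le => e e0.
have e'0 : 0 < e / (k.+1)%:R by rewrite divr_gt0 // ltr0n.
have := near_infty_natSinv_lt (PosNum e'0); apply: filterS => n /= Hn.
have H1 : `|g v - g (G n (F n v))| <= k%:R * (a n)^-1.
  rewrite ler_norml; apply/andP; split.
    rewrite lerNl opprB; apply: le_trans (Lg _ _) _.
    apply: le_trans (_ : \sum_(i < k) (a n)^-1 <= _).
      apply: ler_sum => i _; rewrite distrC; exact: Fb.
    by rewrite sumr_const card_ord mulr_natl.
  apply: le_trans (Lg _ _) _.
  apply: le_trans (_ : \sum_(i < k) (a n)^-1 <= _).
    by apply: ler_sum => i _; exact: Fb.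
  by rewrite sumr_const card_ord mulr_natl.
apply: le_trans H1 _.
apply: le_trans (_ : k%:R * (e / k.+1%:R) <= _).
  by apply: ler_wpM2l => //; apply: ltW.
rewrite mulrA ler_pdivrMr ?ltr0n // [k%:R * e]mulrC ler_wpM2l //; first exact: ltW.
by rewrite ler_nat.
Qed.

Lemma dotp_mix (R : realType) k (w x y : k.-tuple R) (a b : R) :
  dotp w [tuple a * tnth x i + b * tnth y i | i < k] = a * dotp w x + b * dotp w y.
Proof.
rewrite /dotp !mulr_sumr -big_split /=; apply: eq_bigr => i _.
by rewrite tnth_mktuple; ring.
Qed.

Definition Qset (R : realType) k (c : R) (U : k.-tuple R -> R) : set (k.-tuple R) :=
  [set q | (forall i, 0 <= tnth q i <= 1) /\
     forall j : {w : k.-tuple R | nonneg_vec w}, dotp (sval j) q <= U (sval j) + c].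
Arguments Qset {R k}.

Theorem claim4p2 (R : realType) (k : nat) (c : R) (hc : 0 <= c)
  (D : probability (k.-tuple R) R)
  (hD : D [set v | nonneg_vec v] = 1%E)
  (M : set (opt R k)) (sel : k.-tuple R -> opt R k)
  (hM : is_mechanism M) (hsel : is_choice M sel)
  (hint : D.-integrable setT (fun v => ((sel v).2)%:E)) :
  exists (M' : set (opt R k)) (sel' : k.-tuple R -> opt R k),
    [/\ is_mechanism M', expensive c M', is_choice M' sel',
        measurable_fun setT (fun v => (sel' v).2) &
        (Rev D sel - c%:E <= Rev D sel')%E].
Proof.
have utilE (v : k.-tuple R) (o : opt R k) : utility v o = dotp v o.1 - o.2 by [].
pose p v := (sel v).2.
pose U v := utility v (sel v).
have U_ge v o : nonneg_vec v -> M o -> utility v o <= U v.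
  by move=> nv Mo; have [_ ] := hsel v nv; apply.
have U0 v : nonneg_vec v -> 0 <= U v.
  move=> nv; apply: le_trans (U_ge v _ nv (proj1 hM)).
  rewrite utilE /dotp /null_opt /= big1 ?subr0 // => i _.
  by rewrite tnth_mktuple mulr0.
pose J := {w : k.-tuple R | nonneg_vec w}.
pose Q := Qset c U.
have Qne : Q !=set0.
  exists [tuple (0:R) | _ < k]; rewrite /Q /Qset; split.
    by move=> i; rewrite tnth_mktuple lexx ler01.
  move=> [w nw] /=; rewrite /dotp big1 => [|i _]; last by rewrite tnth_mktuple mulr0.
  by rewrite addr_ge0 // U0.
have qmP v : {q | Q q & forall q', Q q' -> dotp v q' <= dotp v q}.
  apply: cid2; exact: (max_exists _ _ J sval (fun j => U (sval j) + c) v Q erefl Qne).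
pose qm v := s2val (qmP v).
pose g v := dotp v (qm v).
have hqm v : Q (qm v) by exact: (s2valP (qmP v)).
have hmax v q' : Q q' -> dotp v q' <= g v.
  by move=> Qq; exact: (s2valP' (qmP v) q' Qq).
have glip v w : g v - g w <= \sum_(i < k) `|tnth v i - tnth w i|.
  have h1 := hmax w (qm v) (hqm v).
  apply: le_trans (_ : dotp v (qm v) - dotp w (qm v) <= _).
    by rewrite /g lerD2l lerN2.
  rewrite /dotp -sumrB; apply: ler_sum => i _.
  have [hb _] := hqm v; have /andP[q0 q1] := hb i.
  have := ler_norm (tnth v i - tnth w i); have := ler_norm (- (tnth v i - tnth w i)); rewrite normrN.
  nra.
have mix v o : nonneg_vec v -> p v < c -> M o -> c <= o.2 -> utility v o <= g v - c.
  move=> nv pvc Mo co.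
  have d0 : 0 < o.2 - p v by rewrite subr_gt0; exact: lt_le_trans co.
  pose th := (c - p v) / (o.2 - p v).
  have th0 : 0 <= th.
    by apply: divr_ge0; [rewrite subr_ge0; exact: ltW | exact: ltW].
  have th1 : th <= 1 by rewrite /th ler_pdivrMr // mul1r lerD2r.
  have thc : th * o.2 + (1 - th) * p v = c.
    rewrite /th; field; by rewrite gt_eqF.
  pose q' := [tuple th * tnth o.1 i + (1 - th) * tnth (sel v).1 i | i < k].
  have Qq' : Q q'.
    split.
      move=> i; rewrite tnth_mktuple.
      have [_ /(_ o Mo i) /andP[a0 a1]] := hM.
      have [Ms _] := hsel v nv.
      have [_ /(_ _ Ms i) /andP[b0 b1]] := hM.
      apply/andP; split; nra.
    move=> [w nw] /=; rewrite dotp_mix.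
    have h1 := U_ge w o nw Mo; have h2 := U_ge w (sel v) nw (proj1 (hsel v nv)).
    rewrite !utilE in h1 h2; rewrite -/(U w) in h2.
    rewrite -thc /p; nra.
  have := hmax v q' Qq'; rewrite dotp_mix.
  have h1 := U_ge v o nv Mo; rewrite /U !utilE in h1 *.
  rewrite -/(p v) in h1 * => h2.
  rewrite -thc; nra.
pose sel' v := if c <= p v then sel v else if c <= g v then (qm v, c) else null_opt R k.
pose M' := [set o : opt R k | o = null_opt R k \/ (M o /\ c <= o.2) \/ exists2 q, Q q & o = (q, c)].
have dot0 v : dotp v (null_opt R k).1 = 0.
  by rewrite /dotp big1 // => i _; rewrite /null_opt /= tnth_mktuple mulr0.
have hp' v : p v - c <= (sel' v).2.
  rewrite /sel'; case: ifP => [_|/negbT]; first by rewrite lerBlDr lerDl.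
  rewrite -ltNge => pc; case: ifP => _ /=; lra.
have mp : measurable_fun setT p.
  by apply/measurable_realfun.measurable_EFinP; exact: (measurable_int _ hint).
have mg : measurable_fun setT g by exact: lip_meas.
have mp' : measurable_fun setT (fun v => (sel' v).2).
  have -> : (fun v => (sel' v).2) =
      (fun v => if c <= p v then p v else if c <= g v then c else 0).
    by apply: funext => v; rewrite /sel'; case: ifP => //; case: ifP.
  apply: measurable_fun_ifT => //.
    exact: measurable_realfun.measurable_fun_ler.
  apply: measurable_fun_ifT => //.
  exact: measurable_realfun.measurable_fun_ler.
exists M', sel'; split => //.
- split; first by left.
  move=> o [->|[[Mo _]|[q Qq ->]]] i.
  + by rewrite /null_opt /= tnth_mktuple lexx ler01.
  + exact: (proj2 hM o Mo i).
  + exact: (proj1 Qq i).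
- by move=> o [->|[[_ co]|[q _ ->]]].
- move=> v nv; have [Ms Umax] := hsel v nv; rewrite /sel'.
  case: ifP => hp.
    split; first by right; left.
    move=> o [->|[[Mo _]|[q Qq ->]]].
    + exact: Umax _ (proj1 hM).
    + exact: Umax.
    + have := proj2 Qq (exist _ v nv); rewrite utilE /= -/(U v) => h; lra.
  have hpc : p v < c by rewrite ltNge hp.
  case: ifP => hg.
    split; first by right; right; exists (qm v).
    move=> o [->|[[Mo co]|[q Qq ->]]]; rewrite ?utilE /= ?dot0.
    + by rewrite -/(g v); lra.
    + by have := mix v o nv hpc Mo co; rewrite utilE.
    + by have := hmax v q Qq; rewrite -/(g v); lra.
  have hgc : g v < c by rewrite ltNge hg.
  split; first by left.
  move=> o [->|[[Mo co]|[q Qq ->]]]; rewrite ?utilE /= ?dot0.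
  + by [].
  + have := mix v o nv hpc Mo co; rewrite utilE; lra.
  + have := hmax v q Qq; lra.
- rewrite /Rev.
  have ic : D.-integrable setT (EFin \o cst c).
    exact: finite_measure_integrable_cst.
  have iabs : D.-integrable setT (fun v => (`|p v| + c)%:E).
    have := integrableD measurableT (integrable_abse hint) ic.
    apply: eq_integrable => // v _ /=; by rewrite EFinD.
  have i' : D.-integrable setT (fun v => ((sel' v).2)%:E).
    apply: (le_integrable measurableT _ _ iabs).
      exact/measurable_realfun.measurable_EFinP.
    move=> v _; rewrite !abse_EFin lee_fin [X in _ <= X]ger0_norm ?addr_ge0 //.
    rewrite /sel'; case: ifP => [_|_]; first by rewrite lerDl.
    case: ifP => _ /=; last by rewrite normr0 addr_ge0.
    by rewrite ger0_norm // lerDr.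
  have cE : c%:E = (\int[D]_(x in setT) (cst c x)%:E)%E.
    rewrite (_ : (fun x => (cst c x)%:E) = cst c%:E) //.
    rewrite integral_cst //; rewrite -[X in X = _]mule1; congr (_ * _)%E; apply/esym; exact: probability_setT.
  rewrite cE -integralB_EFin //.
  apply: le_integral => //.
    exact: (integrableB measurableT hint ic).
  by move=> v _; rewrite -EFinB lee_fin; exact: hp'.
Qed.
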